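(* Let $d\ge2$ and let $A\in\mathcal{B}(\mathbb{C}^d)$ be positive definite with eigenvalues $t_1,\dots,t_d>0$ counted with multiplicity. The following are equivalent: (i) $A=A_{T,C}$ for some power bounded $T\in\mathcal{B}(\mathbb{C}^d)$ of class $C_{11}$; (ii) $\frac1{t_1}+\dots+\frac1{t_d}=d$; (iii) there is an invertible $S\in\mathcal{B}(\mathbb{C}^d)$ all of whose column vectors are unit vectors such that $A=S^{*-1}S^{-1}=(SS^* )^{-1}$.
   Context: For a power bounded matrix $T$, the Cesàro asymptotic limit is $A_{T,C}=\lim_{n\to\infty}\frac1n\sum_{j=1}^nT^{*j}T^j$ (this limit exists). For a power bounded $T$, $\mathcal{H}_0(T)=\{x:\|T^nx\|\to0\}$; $T$ is of class $C_{1\cdot}$ if $\mathcal{H}_0(T)=\{0\}$, of class $C_{\cdot1}$ if $T^*$ is of class $C_{1\cdot}$, and of class $C_{11}$ if both hold. *)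

(* Defs.v *)
(* Complex numbers: an arbitrary numClosedFieldType C whose
   real elements are Dedekind complete (such a C is isomorphic to the complex field). *)
From HB Require Import structures.
From mathcomp Require Import all_boot all_order all_algebra.
Set Implicit Arguments. Unset Strict Implicit. Unset Printing Implicit Defensive.
Import Order.TTheory GRing.Theory Num.Theory.
Local Open Scope ring_scope.

Section Defs.
Variable C : numClosedFieldType.

Definition complete_reals : Prop :=
  forall S : C -> Prop,
    (forall x, S x -> x \is Num.real) -> (exists x, S x) ->
    (exists b, forall x, S x -> x <= b) ->
    exists s, (forall x, S x -> x <= s) /\
              (forall b, (forall x, S x -> x <= b) -> s <= b).

Variable d : nat.

Definition adjmx (m n : nat) (A : 'M[C]_(m, n)) : 'M[C]_(n, m) :=
  (map_mx Num.conj A)^T.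

Definition vnorm (x : 'cV[C]_d) : C := sqrtC (\sum_i `|x i 0| ^+ 2).

Definition conv (u : nat -> C) (l : C) : Prop :=
  forall eps : C, 0 < eps -> exists N : nat, forall n : nat, (N <= n)%N -> `|u n - l| < eps.

(* entrywise convergence of matrices (= norm convergence in finite dimension) *)
Definition mx_conv (M : nat -> 'M[C]_d) (L : 'M[C]_d) : Prop :=
  forall i j, conv (fun n => M n i j) (L i j).

Definition positive_definite (A : 'M[C]_d) : Prop :=
  adjmx A = A /\ forall x : 'cV[C]_d, x != 0 -> 0 < (adjmx x *m A *m x) 0 0.

Definition power_bounded (T : 'M[C]_d) : Prop :=
  exists M : C, forall (n : nat) (x : 'cV[C]_d), vnorm ((T ^+ n) *m x) <= M * vnorm x.

Definition in_H0 (T : 'M[C]_d) (x : 'cV[C]_d) : Prop :=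
  conv (fun n => vnorm ((T ^+ n) *m x)) 0.

Definition class_C1dot (T : 'M[C]_d) : Prop := forall x, in_H0 T x -> x = 0.
Definition class_Cdot1 (T : 'M[C]_d) : Prop := class_C1dot (adjmx T).
Definition class_C11 (T : 'M[C]_d) : Prop := class_C1dot T /\ class_Cdot1 T.

Definition cesaro_mean (T : 'M[C]_d) (n : nat) : 'M[C]_d :=
  (n%:R)^-1 *: \sum_(1 <= j < n.+1) (adjmx (T ^+ j) *m T ^+ j).

Definition is_cesaro_limit (T A : 'M[C]_d) : Prop := mx_conv (cesaro_mean T) A.

End Defs.

(* Main.v *)
Require Import Defs.
From HB Require Import structures.
From mathcomp Require Import all_boot all_order all_algebra.
From Stdlib Require Import Classical.
From mathcomp Require Import ring.
From mathcomp Require Import cyclic separable cyclotomic.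
Set Implicit Arguments. Unset Strict Implicit. Unset Printing Implicit Defensive.
Import Order.TTheory GRing.Theory Num.Theory.
Local Open Scope ring_scope.
Section Conv.
Variable C : numClosedFieldType.
Implicit Types (u v : nat -> C) (a b : C).

Lemma conv_cst a : conv (fun _ => a) a.
Proof. by move=> e e0; exists 0%N => n _; rewrite subrr normr0. Qed.

Lemma half_pos (e : C) : 0 < e -> 0 < e / 2%:R.
Proof. by move=> e0; rewrite divr_gt0 // ltr0n. Qed.

Lemma half_add (e : C) : e / 2%:R + e / 2%:R = e.
Proof. have h : (2%:R : C) != 0 by rewrite pnatr_eq0. by field. Qed.

Lemma conv_add u v a b : conv u a -> conv v b -> conv (fun n => u n + v n) (a + b).
Proof.
move=> cu cv e e0; have e2 := half_pos e0.
have [N1 H1] := cu _ e2; have [N2 H2] := cv _ e2.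
exists (maxn N1 N2) => n; rewrite geq_max => /andP[n1 n2].
rewrite opprD addrACA.
apply: le_lt_trans (ler_normD _ _) _.
by rewrite -[e]half_add ltrD ?H1 ?H2.
Qed.

Lemma conv_scale c u a : conv u a -> conv (fun n => c * u n) (c * a).
Proof.
move=> cu e e0; have [->|c0] := eqVneq c 0.
  by exists 0%N => n _; rewrite !mul0r subrr normr0.
have nc : 0 < `|c| by rewrite normr_gt0.
have [N HN] := cu (e / `|c|) (divr_gt0 e0 nc).
exists N => n /HN h; rewrite -mulrBr normrM.
by rewrite -(ltr_pM2l nc) in h; rewrite mulrCA mulfV ?mulr1 in h; rewrite ?gt_eqF.
Qed.

Lemma conv_opp u a : conv u a -> conv (fun n => - u n) (- a).
Proof.
move=> cu e e0; have [N HN] := cu e e0; exists N => n /HN.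
by rewrite -opprD normrN.
Qed.

Lemma conv_ext u v a (N : nat) : (forall n, (N <= n)%N -> u n = v n) -> conv u a -> conv v a.
Proof.
move=> huv cu e e0; have [M HM] := cu e e0; exists (maxn N M) => n.
rewrite geq_max => /andP[nN nM]; rewrite -huv //; exact: HM.
Qed.

Lemma conv_sum_seq (I : Type) (r : seq I) (F : I -> nat -> C) (L : I -> C) :
  (forall i, conv (F i) (L i)) ->
  conv (fun n => \sum_(i <- r) F i n) (\sum_(i <- r) L i).
Proof.
move=> h; elim: r => [|i r IH].
  by rewrite big_nil; apply: (@conv_ext (fun=> 0) _ _ 0) (conv_cst _) => n _; rewrite big_nil.
rewrite big_cons; apply: (@conv_ext _ _ _ 0) (conv_add (h i) IH) => n _.
by rewrite big_cons.
Qed.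

Lemma conv_sum (I : finType) (F : I -> nat -> C) (L : I -> C) :
  (forall i, conv (F i) (L i)) ->
  conv (fun n => \sum_i F i n) (\sum_i L i).
Proof. exact: conv_sum_seq. Qed.

Lemma conv_unique u a b : conv u a -> conv u b -> a = b.
Proof.
move=> ca cb; apply/eqP; rewrite -subr_eq0; apply/negPn/negP => ab.
have e0 : 0 < `|a - b| by rewrite normr_gt0.
have e2 := half_pos e0.
have [N1 H1] := ca _ e2; have [N2 H2] := cb _ e2.
have h1 := H1 (maxn N1 N2) (leq_maxl _ _).
have h2 := H2 (maxn N1 N2) (leq_maxr _ _).
have : `|a - b| < `|a - b|.
  rewrite -{2}[`|a - b|]half_add.
  apply: le_lt_trans (ltrD h1 h2).
  rewrite (_ : a - b = (a - u (maxn N1 N2)) + (u (maxn N1 N2) - b)).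
    by apply: le_trans (ler_normD _ _) _; rewrite distrC.
  by rewrite addrA subrK.
by rewrite ltxx.
Qed.

Lemma conv_cst_eq a b : conv (fun _ => a) b -> a = b.
Proof. by move=> h; apply: conv_unique (conv_cst a) h. Qed.

Lemma conv_le0 u v : conv v 0 -> (forall n, `|u n| <= `|v n|) -> conv u 0.
Proof.
move=> cv h e e0; have [N HN] := cv e e0; exists N => n /HN.
by rewrite !subr0; apply: le_lt_trans.
Qed.

Lemma conv0P u a : conv u a <-> conv (fun n => u n - a) 0.
Proof.
split=> h e e0; have [N HN] := h e e0; exists N => n /HN.
  by rewrite subr0.
by rewrite subr0.
Qed.

Hypothesis hC : complete_reals C.

Lemma arch (b : C) : b \is Num.real -> exists n : nat, b < n%:R.
Proof.
move=> br; apply: NNPP => hn.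
have ub : forall n : nat, n%:R <= b.
  move=> n; rewrite real_leNgt ?realn //; apply/negP => h; apply: hn; by exists n.
pose S := fun x : C => exists n : nat, x = n%:R.
have h1 : forall x, S x -> x \is Num.real by move=> x [n ->]; exact: realn.
have h2 : exists x, S x by exists 0; exists 0%N.
have h3 : exists b, forall x, S x -> x <= b by exists b => x [n ->].
have [s [hs1 hs2]] := hC h1 h2 h3.
have : s <= s - 1.
  apply: hs2 => x [n ->]; rewrite lerBrDr -(natrD _ n 1) addn1; apply: hs1; by exists n.+1.
by rewrite lerDl oppr_ge0 ler10.
Qed.


Lemma conv_invn (w : nat -> C) (K : C) : (forall n, `|w n| <= K) ->
  conv (fun n => n%:R^-1 * w n) 0.
Proof.
move=> hw e e0.
have K0 : 0 <= K by apply: le_trans (hw 0%N).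
have Kr : K / e \is Num.real by rewrite rpredM ?rpredV ?ger0_real // ltW.
have [N HN] := arch Kr; exists N.+1 => n hn.
have n0 : (0 < n)%N by apply: leq_trans hn.
have nr : (0 : C) < n%:R by rewrite ltr0n.
rewrite subr0 normrM normfV normr_nat.
rewrite ltr_pdivrMl //.
apply: le_lt_trans (hw n) _.
have : K < e * N%:R by rewrite -ltr_pdivrMl // mulrC.
move/lt_le_trans; apply; rewrite mulrC ler_pM2r // ler_nat; exact: ltnW.
Qed.

Lemma mx_conv_mul (d : nat) (M : nat -> 'M[C]_d) (L X Y : 'M[C]_d) :
  mx_conv M L -> mx_conv (fun n => X *m M n *m Y) (X *m L *m Y).
Proof.
move=> h i j; rewrite !mxE.
apply: (@conv_ext (fun n => \sum_l Y l j * \sum_k X i k * M n k l) _ _ 0).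
  move=> n _; rewrite !mxE; apply: eq_bigr => l _; rewrite mulrC !mxE //.
rewrite (_ : \sum_l _ = \sum_l Y l j * \sum_k X i k * L k l); last first.
  by apply: eq_bigr => l _; rewrite mulrC mxE.
apply: conv_sum => l; apply: conv_scale; apply: conv_sum => k.
exact: conv_scale.
Qed.

Lemma mx_conv_tr (d : nat) (M : nat -> 'M[C]_d) (L : 'M[C]_d) :
  mx_conv M L -> conv (fun n => \tr (M n)) (\tr L).
Proof. by move=> h; apply: conv_sum => i; exact: h. Qed.

End Conv.
Section Adj.
Variable C : numClosedFieldType.


Lemma adjmx_entry m n (A : 'M[C]_(m, n)) i j : adjmx A i j = (A j i)^*.
Proof. by rewrite /adjmx !mxE. Qed.

Lemma adjmxM m n p (A : 'M[C]_(m, n)) (B : 'M[C]_(n, p)) :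
  adjmx (A *m B) = adjmx B *m adjmx A.
Proof. by rewrite /adjmx map_mxM trmx_mul. Qed.

Lemma adjmxK m n (A : 'M[C]_(m, n)) : adjmx (adjmx A) = A.
Proof. by apply/matrixP => i j; rewrite !adjmx_entry conjCK. Qed.

Lemma adjmx1 n : adjmx (1%:M : 'M[C]_n) = 1%:M.
Proof. by rewrite /adjmx map_mx1 trmx1. Qed.

Lemma adjmxD m n (A B : 'M[C]_(m, n)) : adjmx (A + B) = adjmx A + adjmx B.
Proof. by apply/matrixP => i j; rewrite adjmx_entry [RHS]mxE !adjmx_entry mxE rmorphD. Qed.

Lemma adjmxX n (A : 'M[C]_n) k : adjmx (A ^+ k) = (adjmx A) ^+ k.
Proof.
elim: k => [|k IH]; first by rewrite !expr0 adjmx1.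
by rewrite exprS adjmxM IH exprSr mulmxE.
Qed.

Lemma adjmx_diag n (v : 'rV[C]_n) : adjmx (diag_mx v) = diag_mx (map_mx Num.conj v).
Proof. by rewrite /adjmx map_diag_mx tr_diag_mx. Qed.

Lemma adjmx_unit n (A : 'M[C]_n) : (adjmx A \in unitmx) = (A \in unitmx).
Proof. by rewrite /adjmx unitmx_tr map_unitmx. Qed.

Lemma adjmxV n (A : 'M[C]_n) : adjmx (invmx A) = invmx (adjmx A).
Proof. by rewrite /adjmx map_invmx trmx_inv. Qed.

End Adj.
Lemma char_poly_conj (R : fieldType) n (Q M : 'M[R]_n) : Q \in unitmx ->
  char_poly (invmx Q *m M *m Q) = char_poly M.
Proof.
move=> Qu; rewrite /char_poly.
have -> : char_poly_mx (invmx Q *m M *m Q) =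
   map_mx polyC (invmx Q) *m char_poly_mx M *m map_mx polyC Q.
  rewrite /char_poly_mx mulmxBr mulmxBl !map_mxM.
  have e : map_mx polyC (invmx Q) *m 'X%:M *m map_mx polyC Q = 'X%:M.
    by rewrite scalar_mxC -mulmxA -map_mxM mulVmx // map_mx1 mulmx1.
  by rewrite e.
rewrite !det_mulmx !det_map_mx mulrC mulrA -rmorphM -det_mulmx mulmxV //.
by rewrite det1 rmorph1 mul1r.
Qed.

Section Spec.
Local Open Scope sesquilinear_scope.
Variable C : numClosedFieldType.
Variable d : nat.
Variable A : 'M[C]_d.
Hypothesis hA : positive_definite A.

Definition P := spectralmx A.
Definition D := spectral_diag A.

Lemma adjmx_tc m n (M : 'M[C]_(m, n)) : adjmx M = M ^t Num.conj.
Proof. by rewrite /adjmx map_trmx. Qed.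

Lemma P_unitary : P *m adjmx P = 1%:M.
Proof. by rewrite adjmx_tc; apply/unitarymxP; apply: spectral_unitarymx. Qed.

Lemma P_unitary' : adjmx P *m P = 1%:M.
Proof. exact: mulmx1C P_unitary. Qed.

Lemma P_unit : P \in unitmx.
Proof. exact: spectral_unit. Qed.

Lemma PPK m (X : 'M[C]_(m, d)) : X *m P *m adjmx P = X.
Proof. by rewrite -mulmxA P_unitary mulmx1. Qed.

Lemma PPK' m (X : 'M[C]_(m, d)) : X *m adjmx P *m P = X.
Proof. by rewrite -mulmxA P_unitary' mulmx1. Qed.

Lemma A_dec : A = adjmx P *m diag_mx D *m P.
Proof.
have Ah : A \is hermsymmx.
  apply/is_hermitianmxP; rewrite expr0 scale1r -adjmx_tc; by case: hA.
have /orthomx_spectralP -> := hermitian_normalmx Ah.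
by rewrite invmx_unitary ?spectral_unitarymx // -adjmx_tc.
Qed.

Lemma D_pos i : 0 < D 0 i.
Proof.
pose x : 'cV[C]_d := adjmx P *m delta_mx i 0.
have x0 : x != 0.
  apply/eqP => /(congr1 (mulmx P)); rewrite /x mulmxA P_unitary mul1mx mulmx0.
  by move/matrixP/(_ i 0); rewrite !mxE !eqxx /= => /eqP; rewrite oner_eq0.
have := (proj2 hA) x x0.
rewrite /x adjmxM adjmxK {1}A_dec !mulmxA !PPK.
have -> : adjmx (delta_mx i 0 : 'cV[C]_d) = delta_mx 0 i.
  by apply/matrixP => a b; rewrite adjmx_entry !mxE rmorph_nat andbC.
by rewrite -rowE -colE !mxE eqxx.
Qed.

Definition Dinv : 'rV[C]_d := \row_i (D 0 i)^-1.

Lemma diag_D_Dinv : diag_mx D *m diag_mx Dinv = 1%:M.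
Proof.
apply/matrixP => i j; rewrite mul_diag_mx !mxE; case: eqVneq => [->|_].
  by rewrite !mulr1n mulfV // gt_eqF ?D_pos.
by rewrite !mulr0n mulr0.
Qed.

Lemma A_mul_inv : A *m (adjmx P *m diag_mx Dinv *m P) = 1%:M.
Proof.
  rewrite {1}A_dec !mulmxA -(mulmxA _ P) P_unitary mulmx1.
  by rewrite -(mulmxA _ (diag_mx D)) diag_D_Dinv mulmx1 P_unitary'.
Qed.

Lemma A_unit : A \in unitmx.
Proof. by have [] := mulmx1_unit A_mul_inv. Qed.

Lemma A_inv : invmx A = adjmx P *m diag_mx Dinv *m P.
Proof.
have h := A_mul_inv. have Au := A_unit.
by rewrite -[RHS](mulKmx Au) h mulmx1.
Qed.

Lemma tr_A_inv : \tr (invmx A) = \sum_i (D 0 i)^-1.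
Proof.
rewrite A_inv mxtrace_mulC mulmxA P_unitary mul1mx mxtrace_diag.
by apply: eq_bigr => i _; rewrite mxE.
Qed.

Lemma char_A : char_poly A = \prod_(i < d) ('X - (D 0 i)%:P).
Proof.
rewrite A_dec.
have -> : adjmx P = invmx P by rewrite -[LHS]mul1mx -(mulVmx P_unit) -mulmxA P_unitary mulmx1.
rewrite char_poly_conj ?P_unit //.
rewrite char_poly_trig ?diag_mx_is_trig //.
by apply: eq_bigr => i _; rewrite mxE eqxx mulr1n.
Qed.


Lemma sum_t (t : 'I_d -> C) : char_poly A = \prod_(i < d) ('X - (t i)%:P) ->
  \sum_i (t i)^-1 = \sum_i (D 0 i)^-1.
Proof.
rewrite char_A => h.
have hp : perm_eq [seq t i | i <- index_enum 'I_d] [seq D 0 i | i <- index_enum 'I_d].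
  by apply: prod_XsubC_eq; rewrite !big_map h.
rewrite -(big_map t xpredT (fun x => x^-1)).
rewrite -(big_map (fun i => D 0 i) xpredT (fun x => x^-1)).
exact: perm_big.
Qed.

End Spec.
Section Norms.
Variable C : numClosedFieldType.
Variable d : nat.
Implicit Types y : 'cV[C]_d.

Lemma sumsq_ge0 y : 0 <= \sum_i `|y i 0| ^+ 2.
Proof. by apply: sumr_ge0 => i _; rewrite exprn_ge0. Qed.

Lemma vnorm_ge0 y : 0 <= vnorm y.
Proof. by rewrite /vnorm sqrtC_ge0 sumsq_ge0. Qed.

Lemma entry_le_vnorm y i : `|y i 0| <= vnorm y.
Proof.
rewrite /vnorm -(sqrCK (normr_ge0 (y i 0))) ler_sqrtC ?qualifE /= ?exprn_ge0 ?sumsq_ge0 //.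
rewrite (bigD1 i) //= lerDl; apply: sumr_ge0 => j _; exact: exprn_ge0.
Qed.

Lemma vnorm_le_sum y : vnorm y <= \sum_i `|y i 0|.
Proof.
have s0 : 0 <= \sum_i `|y i 0| by apply: sumr_ge0.
rewrite /vnorm -(sqrCK s0) ler_sqrtC ?qualifE /= ?exprn_ge0 ?sumsq_ge0 //.
rewrite expr2 big_distrl /=; apply: ler_sum => i _.
rewrite big_distrr /= (bigD1 i) //= expr2 lerDl.
by apply: sumr_ge0 => j _; rewrite mulr_ge0.
Qed.

Lemma vnorm_delta k : vnorm (delta_mx k 0 : 'cV[C]_d) = 1.
Proof.
rewrite /vnorm (bigD1 k) //= big1 ?addr0 ?mxE ?eqxx /= ?normr1 ?expr1n ?sqrtC1 //.
by move=> j /negbTE jk; rewrite mxE jk /= normr0 expr0n.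
Qed.

Lemma vnorm_mul (M : 'M[C]_d) y :
  vnorm (M *m y) <= (\sum_i \sum_j `|M i j|) * vnorm y.
Proof.
apply: le_trans (vnorm_le_sum _) _; rewrite mulr_suml; apply: ler_sum => i _.
rewrite mxE mulr_suml; apply: le_trans (ler_norm_sum _ _ _) _.
apply: ler_sum => j _; rewrite normrM ler_wpM2l ?entry_le_vnorm //.
Qed.

End Norms.
Section Dir1.
Variable C : numClosedFieldType.
Hypothesis hC : complete_reals C.
Variable d : nat.
Variables A T : 'M[C]_d.
Hypothesis Au : A \in unitmx.
Hypothesis hT : power_bounded T.
Hypothesis hlim : is_cesaro_limit T A.

Definition G (j : nat) := adjmx (T ^+ j) *m T ^+ j.

Lemma entry_bound : exists M : C, forall n i k, `|(T ^+ n) i k| <= M.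
Proof.
have [M HM] := hT; exists M => n i k.
have := HM n (delta_mx k 0); rewrite vnorm_delta mulr1.
apply: le_trans; rewrite -colE.
have -> : (T ^+ n) i k = col k (T ^+ n) i 0 by rewrite mxE.
exact: (entry_le_vnorm (col k (T ^+ n)) i).
Qed.

Lemma G_bound : exists K : C, forall n i j, `|G n i j| <= K.
Proof.
have [M HM] := entry_bound; exists (\sum_(k < d) M * M) => n i j.
rewrite mxE; apply: le_trans (ler_norm_sum _ _ _) _; apply: ler_sum => k _.
by rewrite normrM adjmx_entry norm_conjC ler_pM.
Qed.

Lemma G_step j : adjmx T *m G j *m T = G j.+1.
Proof. by rewrite /G exprSr -mulmxE adjmxM !mulmxA. Qed.

Lemma cesaro_step n : adjmx T *m cesaro_mean T n *m T - cesaro_mean T n =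
  n%:R^-1 *: (G n.+1 - G 1).
Proof.
rewrite /cesaro_mean -scalemxAr -scalemxAl -scalerBr; congr (_ *: _).
rewrite mulmx_sumr mulmx_suml -sumrB.
rewrite (eq_bigr (fun j => G j.+1 - G j)); last by move=> j _; rewrite G_step.
by rewrite telescope_sumr.
Qed.

Lemma TAT : adjmx T *m A *m T = A.
Proof.
apply/eqP; rewrite -subr_eq0; apply/eqP/matrixP => i j; rewrite mxE.
have c1 : conv (fun n => (adjmx T *m cesaro_mean T n *m T - cesaro_mean T n) i j)
               ((adjmx T *m A *m T) i j - A i j).
  apply: (conv_ext (u := fun n => (adjmx T *m cesaro_mean T n *m T) i j + - cesaro_mean T n i j) (N := 0)).
    by move=> n _; rewrite !mxE.
  by apply: conv_add; [apply: mx_conv_mul | apply: conv_opp; apply: hlim].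
have [K HK] := G_bound.
have c2 : conv (fun n => (adjmx T *m cesaro_mean T n *m T - cesaro_mean T n) i j) 0.
  apply: (conv_ext (u := fun n => n%:R^-1 * (G n.+1 i j - G 1 i j)) (N := 0)).
    by move=> n _; rewrite cesaro_step !mxE.
  apply: (conv_invn hC (K := K + K)) => n.
  by apply: le_trans (ler_normB _ _) _; rewrite lerD.
by move: (conv_unique c1 c2); rewrite !mxE.
Qed.

Lemma TAiT : T *m invmx A *m adjmx T = invmx A.
Proof.
have h : invmx A *m adjmx T *m A *m T = 1%:M.
  by rewrite -(mulmxA _ A) -mulmxA (mulmxA (adjmx T)) TAT mulVmx.
have h2 := mulmx1C h.
by rewrite -[RHS]mul1mx -h2 !mulmxA mulmxK.
Qed.

Lemma TjAiT j : T ^+ j *m invmx A *m adjmx (T ^+ j) = invmx A.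
Proof.
elim: j => [|j IH]; first by rewrite expr0 adjmx1 mul1mx mulmx1.
by rewrite exprS -mulmxE adjmxM !mulmxA -(mulmxA T) -(mulmxA _ _ (adjmx (T ^+ j))) IH TAiT.
Qed.

Lemma tr_G j : \tr (invmx A *m G j) = \tr (invmx A).
Proof. by rewrite /G mulmxA mxtrace_mulC mulmxA TjAiT. Qed.

Lemma tr_cesaro n : (0 < n)%N -> \tr (invmx A *m cesaro_mean T n) = \tr (invmx A).
Proof.
move=> n0; rewrite /cesaro_mean -scalemxAr mxtraceZ mulmx_sumr raddf_sum /=.
rewrite (eq_bigr (fun=> \tr (invmx A))); last by move=> j _; rewrite tr_G.
rewrite sumr_const_nat subn1 /= -(mulr_natl (\tr (invmx A))) mulrA mulVf ?mul1r //.
by rewrite pnatr_eq0 -lt0n.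
Qed.

Lemma tr_Ainv : \tr (invmx A) = d%:R.
Proof.
have c := mx_conv_tr (mx_conv_mul (invmx A) 1%:M hlim).
rewrite mulmx1 mulVmx // mxtrace1 in c.
apply: conv_cst_eq; apply: (conv_ext (N := 1)) c => n n1.
by rewrite mulmx1 tr_cesaro.
Qed.

End Dir1.
Lemma prim_root_exists (C : numClosedFieldType) n : (n > 0)%N ->
  exists z : C, n.-primitive_root z.
Proof.
pose p : {poly C} := 'X^n - 1; have [r Dp] := closed_field_poly_normal p.
move=> n_gt0; rewrite (monicP _) ?monicXnsubC // scale1r in Dp.
have rn1: all n.-unity_root r by apply/allP=> z; rewrite -root_prod_XsubC -Dp.
have sz_r: (n < (size r).+1)%N.
  by rewrite -(size_prod_XsubC r id) -Dp size_XnsubC.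
have [|z] := hasP (has_prim_root n_gt0 rn1 _ sz_r); last by exists z.
by rewrite -separable_prod_XsubC -Dp separable_Xn_sub_1 // pnatr_eq0 -lt0n.
Qed.

Section Fourier.
Variable C : numClosedFieldType.
Variable d : nat.
Hypothesis d0 : (0 < d)%N.
Variable w : C.
Hypothesis hw : d.-primitive_root w.

Lemma w_norm : `|w| = 1.
Proof.
apply/eqP; rewrite -(pexpr_eq1 d0) // -normrX prim_expr_order // normr1 //.
Qed.

Lemma normX1 (x : C) k : `|x| = 1 -> `|x ^+ k| = 1.
Proof. by move=> h; rewrite normrX h expr1n. Qed.

Lemma conj_unit (x : C) : `|x| = 1 -> x^* = x^-1.
Proof.
move=> h; have x0 : x != 0 by rewrite -normr_eq0 h oner_eq0.
apply: (mulfI x0); rewrite mulfV // -normCK h expr1n //.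
Qed.

Lemma geom_sum0 (x : C) : x ^+ d = 1 -> x != 1 -> \sum_(k < d) x ^+ k = 0.
Proof.
move=> xd x1; have x10 : x - 1 != 0 by rewrite subr_eq0.
apply: (mulfI x10).
rewrite mulr0 mulr_sumr -(big_mkord xpredT (fun k => (x - 1) * x ^+ k)).
rewrite (eq_bigr (fun k => x ^+ k.+1 - x ^+ k)); last by move=> k _; rewrite mulrBl -exprS mul1r.
by rewrite telescope_sumr // xd expr0 subrr.
Qed.

Definition cW := (sqrtC (d%:R : C))^-1.

Lemma cW_real : cW^* = cW.
Proof.
by apply/CrealP; rewrite /cW rpredV sqrtC_real // ler0n.
Qed.

Lemma cW2 : cW ^+ 2 = d%:R^-1.
Proof. by rewrite /cW exprVn sqrtCK. Qed.

Definition W : 'M[C]_d := \matrix_(j, k) (cW * w ^+ (j * k)).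

Lemma W_unitary : W *m adjmx W = 1%:M.
Proof.
apply/matrixP => j l; rewrite !mxE.
rewrite (eq_bigr (fun k : 'I_d => cW ^+ 2 * (w ^+ j * (w ^+ l)^*) ^+ k)); last first.
  move=> k _; rewrite adjmx_entry !mxE rmorphM /= cW_real rmorphXn /= !exprM.
  by rewrite exprMn expr2 rmorphXn /= mulrACA.
rewrite -mulr_sumr cW2.
have wl : `|w ^+ l| = 1 by apply: normX1; exact: w_norm.
have wj : `|w ^+ j| = 1 by apply: normX1; exact: w_norm.
case: eqVneq => [<-|jl].
  rewrite (eq_bigr (fun=> 1)); last first.
    by move=> k _; rewrite -normCK wj !expr1n.
  by rewrite sumr_const card_ord mulVf // pnatr_eq0 -lt0n.
rewrite mulr0n geom_sum0 ?mulr0 //.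
  rewrite exprMn -rmorphXn /= -!exprM !(mulnC _ d) !exprM (prim_expr_order hw).
  by rewrite !expr1n rmorph1 mulr1.
rewrite conj_unit //; apply: contra jl => /eqP h.
have e : w ^+ j = w ^+ l.
  by rewrite -[RHS]mul1r -h -mulrA mulVf ?mulr1 // -normr_eq0 wl oner_eq0.
move: e => /eqP; rewrite (eq_prim_root_expr hw) !modn_small //.

Qed.


Lemma W_entry2 i k : `|W i k| ^+ 2 = d%:R^-1.
Proof.
rewrite mxE normrM normX1 ?w_norm // mulr1 -cW2; congr (_ ^+ 2).
by rewrite ger0_norm // /cW invr_ge0 sqrtC_ge0 ler0n.
Qed.

Lemma W_diag (v : 'rV[C]_d) k :
  (adjmx W *m diag_mx v *m W) k k = d%:R^-1 * \sum_i v 0 i.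
Proof.
rewrite mxE mulr_sumr; apply: eq_bigr => i _.
rewrite mul_mx_diag mxE adjmx_entry -mulrA mulrC -mulrA -normCK W_entry2.
by rewrite mulrC.
Qed.

End Fourier.

Lemma colnorm (C : numClosedFieldType) n (M : 'M[C]_n) j :
  \sum_i `|M i j| ^+ 2 = (adjmx M *m M) j j.
Proof. by rewrite mxE; apply: eq_bigr => i _; rewrite adjmx_entry normCKC. Qed.

Lemma diag_mxM (C : numClosedFieldType) n (u v : 'rV[C]_n) :
  diag_mx u *m diag_mx v = diag_mx (\row_i (u 0 i * v 0 i)).
Proof.
apply/matrixP => i j; rewrite mul_diag_mx !mxE; case: eqVneq => [->|_].
  by rewrite !mulr1n.
by rewrite !mulr0n mulr0.
Qed.

Section Dir2.
Variable C : numClosedFieldType.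
Variable d : nat.
Hypothesis d0 : (0 < d)%N.
Variable A : 'M[C]_d.
Hypothesis hA : positive_definite A.
Hypothesis hsum : \sum_i (D A 0 i)^-1 = d%:R.
Variable w : C.
Hypothesis hw : d.-primitive_root w.

Let r : 'rV[C]_d := \row_i sqrtC ((D A 0 i)^-1).
Let S := adjmx (P A) *m diag_mx r *m W d w.

Lemma r_conj : diag_mx r *m diag_mx (map_mx Num.conj r) = diag_mx (Dinv A).
Proof.
rewrite diag_mxM; congr diag_mx; apply/matrixP => i j; rewrite !mxE.
have h : 0 <= sqrtC ((D A 0 j)^-1) by rewrite sqrtC_ge0 invr_ge0 ltW // D_pos.
rewrite (CrealP (ger0_real h)) -expr2 sqrtCK //.
Qed.

Lemma r_conj' : diag_mx (map_mx Num.conj r) *m diag_mx r = diag_mx (Dinv A).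
Proof. by rewrite diag_mxC r_conj. Qed.

Lemma adjS : adjmx S = adjmx (W d w) *m diag_mx (map_mx Num.conj r) *m P A.
Proof. by rewrite /S !adjmxM adjmxK adjmx_diag mulmxA. Qed.

Lemma SadjS : S *m adjmx S = invmx A.
Proof.
rewrite adjS /S A_inv // -r_conj.
rewrite !mulmxA; congr (_ *m _).
rewrite -!mulmxA; congr (_ *m _); congr (_ *m _).
by rewrite mulmxA W_unitary // mul1mx.
Qed.

Lemma adjSS : adjmx S *m S = adjmx (W d w) *m diag_mx (Dinv A) *m W d w.
Proof.
rewrite adjS /S -r_conj'.
rewrite !mulmxA; congr (_ *m _).
rewrite -!mulmxA; congr (_ *m _); congr (_ *m _).
by rewrite mulmxA P_unitary // mul1mx.
Qed.

Lemma S_cols j : \sum_i `|S i j| ^+ 2 = 1.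
Proof.
rewrite colnorm adjSS W_diag //.
rewrite (eq_bigr (fun i => (D A 0 i)^-1)); last by move=> i _; rewrite mxE.
by rewrite hsum mulVf // pnatr_eq0 -lt0n.
Qed.

Lemma dir2 : exists S : 'M[C]_d, [/\ S \in unitmx,
          (forall j : 'I_d, \sum_(i < d) `|S i j| ^+ 2 = 1) &
          A = invmx (S *m adjmx S)].
Proof.
exists S; split.
- have : S *m adjmx S \in unitmx.
    by rewrite SadjS unitmx_inv A_unit.
  by rewrite unitmx_mul => /andP[].
- exact: S_cols.
- by rewrite SadjS invmxK.
Qed.

End Dir2.
Lemma invmx_uniq (C : numClosedFieldType) n (X Y : 'M[C]_n) : X *m Y = 1%:M -> invmx X = Y.
Proof.
move=> h; have [Xu _] := mulmx1_unit h.
by rewrite -[RHS](mulKmx Xu) h mulmx1.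
Qed.

Lemma mulmxE' (C : numClosedFieldType) n (X Y : 'M[C]_n) : X * Y = X *m Y.
Proof. by []. Qed.

Lemma diag_mxX (C : numClosedFieldType) n (v : 'rV[C]_n) j :
  diag_mx v ^+ j = diag_mx (\row_k (v 0 k) ^+ j).
Proof.
elim: j => [|j IH].
  rewrite expr0; apply/matrixP => a b; rewrite !mxE expr0 //.
by rewrite exprSr IH mulmxE' diag_mxM; congr diag_mx; apply/matrixP => a b; rewrite !mxE exprSr.
Qed.

Section ConjDiag.
Variable C : numClosedFieldType.
Variable d : nat.
Variable S : 'M[C]_d.
Hypothesis Su : S \in unitmx.
Variable v : 'rV[C]_d.
Hypothesis hv : forall k, `|v 0 k| = 1.

Let T := S *m diag_mx v *m invmx S.

Lemma powT n : T ^+ n = S *m diag_mx (\row_k (v 0 k) ^+ n) *m invmx S.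
Proof.
elim: n => [|n IH].
  rewrite expr0 -diag_mxX expr0 mulmx1 mulmxV //.
rewrite exprSr IH mulmxE' /T -!mulmxA (mulmxA (invmx S)) mulVmx // mul1mx.
by rewrite !mulmxA -(mulmxA S) -diag_mxX -[diag_mx v ^+ n *m diag_mx v]mulmxE' -exprSr diag_mxX.
Qed.

Lemma powT_entry n i j : `|(T ^+ n) i j| <= \sum_k `|S i k| * `|invmx S k j|.
Proof.
rewrite powT mxE; apply: le_trans (ler_norm_sum _ _ _) _; apply: ler_sum => k _.
rewrite mul_mx_diag !mxE normrM normrM normrX hv expr1n mulr1 //.
Qed.

Lemma pbT : power_bounded T.
Proof.
exists (\sum_i \sum_j \sum_k `|S i k| * `|invmx S k j|) => n x.
apply: le_trans (vnorm_mul _ _) _; apply: ler_wpM2r; first exact: vnorm_ge0.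
by apply: ler_sum => i _; apply: ler_sum => j _; apply: powT_entry.
Qed.

Lemma C1T : class_C1dot T.
Proof.
move=> x hx; pose y := invmx S *m x.
suff y0 : y = 0 by rewrite -(mulKVmx Su x) -/y y0 mulmx0.
apply/matrixP => k c; rewrite ord1 [RHS]mxE {c}.
have e0 : forall i, conv (fun n => (T ^+ n *m x) i 0) 0.
  move=> i; apply: (conv_le0 hx) => n.
  by rewrite (ger0_norm (vnorm_ge0 _)); apply: entry_le_vnorm.
have c1 : conv (fun n => \sum_i invmx S k i * (T ^+ n *m x) i 0) 0.
  have h := conv_sum (fun i => conv_scale (invmx S k i) (e0 i)).
  have s0 : \sum_i invmx S k i * 0 = 0 by rewrite big1 // => i _; rewrite mulr0.
  by rewrite s0 in h.
have c2 : conv (fun n => (v 0 k) ^+ n * y k 0) 0.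
  apply: (conv_ext (N := 0)) c1 => n _.
  have -> : \sum_i invmx S k i * (T ^+ n *m x) i 0 = (invmx S *m (T ^+ n *m x)) k 0.
    by rewrite mxE.
  by rewrite powT -!mulmxA mulKmx // mul_diag_mx !mxE.
apply/eqP; rewrite -normr_eq0; apply: contraT => hy.
have yp : 0 < `|y k 0| by rewrite lt_def hy normr_ge0.
have [N HN] := c2 _ yp.
by move: (HN N (leqnn N)); rewrite subr0 normrM normrX hv expr1n mul1r ltxx.
Qed.

End ConjDiag.
Section Dir3.
Variable C : numClosedFieldType.
Hypothesis hC : complete_reals C.
Variable d : nat.
Hypothesis d0 : (0 < d)%N.
Variable w : C.
Hypothesis hw : d.-primitive_root w.
Variable S : 'M[C]_d.
Hypothesis Su : S \in unitmx.
Hypothesis hcols : forall j : 'I_d, \sum_(i < d) `|S i j| ^+ 2 = 1.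

Let z : 'rV[C]_d := \row_k w ^+ k.
Lemma z_norm k : `|z 0 k| = 1.
Proof. by rewrite mxE normX1 // (w_norm d0 hw). Qed.

Let T := S *m diag_mx z *m invmx S.
Let X := adjmx (invmx S).
Let Y := invmx S.
Let G0 := adjmx S *m S.
Let Uj (j : nat) := diag_mx (\row_k (z 0 k) ^+ j).
Let Inner (n : nat) := n%:R^-1 *: \sum_(1 <= j < n.+1) (adjmx (Uj j) *m G0 *m Uj j).

Lemma T_pb : power_bounded T.
Proof. exact: (pbT Su z_norm). Qed.

Lemma T_C11 : class_C11 T.
Proof.
split; first exact: (C1T Su z_norm).
rewrite /class_Cdot1.
pose S' := invmx (adjmx S).
have S'u : S' \in unitmx by rewrite unitmx_inv adjmx_unit.
have -> : adjmx T = S' *m diag_mx (map_mx Num.conj z) *m invmx S'.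
  by rewrite /T !adjmxM adjmx_diag adjmxV /S' invmxK !mulmxA.
apply: (C1T S'u) => k; rewrite mxE norm_conjC; exact: z_norm.
Qed.

Lemma cesaro_eq n : cesaro_mean T n = X *m Inner n *m Y.
Proof.
rewrite /cesaro_mean /Inner -scalemxAr -scalemxAl; congr (_ *: _).
rewrite mulmx_sumr mulmx_suml; apply: eq_bigr => j _.
rewrite /T powT // -/(Uj j) !adjmxM !mulmxA //.
Qed.

Lemma Uj_entry j k l : (adjmx (Uj j) *m G0 *m Uj j) k l =
   ((z 0 k)^* * z 0 l) ^+ j * G0 k l.
Proof.
rewrite /Uj adjmx_diag mul_mx_diag mul_diag_mx !mxE rmorphXn /= exprMn.
by rewrite mulrAC.
Qed.

Lemma Inner_conv : mx_conv Inner 1%:M.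
Proof.
move=> k l.
have e : forall n, Inner n k l = n%:R^-1 * \sum_(1 <= j < n.+1) (((z 0 k)^* * z 0 l) ^+ j * G0 k l).
  move=> n; rewrite /Inner mxE summxE; congr (_ * _); apply: eq_bigr => j _.
  exact: Uj_entry.
case: (eqVneq k l) => [kl|kl].
  subst l.
  have x1 : (z 0 k)^* * z 0 k = 1 by rewrite -normCKC z_norm expr1n.
  have g1 : G0 k k = 1 by rewrite -colnorm hcols.
  apply: (conv_ext (u := fun=> 1) (N := 1)); last first.
    by rewrite mxE eqxx; exact: conv_cst.
  move=> n n1; rewrite e x1 g1.
  rewrite (eq_bigr (fun=> 1)); last by move=> j _; rewrite expr1n mulr1.
  rewrite sumr_const_nat subn1 /= mulVf // pnatr_eq0 -lt0n //.
set x := (z 0 k)^* * z 0 l.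
have xn : `|x| = 1 by rewrite normrM norm_conjC !z_norm mulr1.
have x1 : x != 1.
  rewrite /x conj_unit ?z_norm //; apply: contra kl => /eqP h.
  have zk0 : z 0 k != 0 by rewrite -normr_eq0 z_norm oner_eq0.
  have e2 : z 0 k = z 0 l by rewrite -[LHS]mulr1 -h mulrA mulfV ?mul1r.
  move: e2; rewrite !mxE => /eqP; rewrite (eq_prim_root_expr hw) !modn_small //.
have x10 : `|x - 1| != 0 by rewrite normr_eq0 subr_eq0.
rewrite mxE (negbTE kl) /=.
apply: (conv_ext (u := fun n => n%:R^-1 * ((\sum_(1 <= j < n.+1) x ^+ j) * G0 k l)) (N := 0)).
  by move=> n _; rewrite e mulr_suml.
apply: (conv_invn hC (K := 2%:R / `|x - 1| * `|G0 k l|)) => n.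
rewrite normrM ler_wpM2r //.
have hs : (\sum_(1 <= j < n.+1) x ^+ j) * (x - 1) = x ^+ n.+1 - x.
  rewrite mulr_suml (eq_bigr (fun j => x ^+ j.+1 - x ^+ j)).
    by rewrite telescope_sumr // expr1.
  by move=> j _; rewrite mulrBr mulr1 exprSr.
have -> : \sum_(1 <= j < n.+1) x ^+ j = (x ^+ n.+1 - x) / (x - 1).
  by rewrite -hs mulfK // -normr_eq0.
rewrite normrM normfV ler_wpM2r ?invr_ge0 //.
by apply: le_trans (ler_normB _ _) _; rewrite normX1 // xn.
Qed.

Lemma T_cesaro : is_cesaro_limit T (invmx (S *m adjmx S)).
Proof.
have h := mx_conv_mul X Y Inner_conv.
have -> : invmx (S *m adjmx S) = X *m 1%:M *m Y.
  apply: invmx_uniq; rewrite mulmx1 /X /Y adjmxV.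
  rewrite mulmxA -(mulmxA S) mulmxV ?adjmx_unit // mulmx1 mulmxV //.
move=> i j; apply: (conv_ext (N := 0)) (h i j) => n _.
by rewrite cesaro_eq.
Qed.

End Dir3.
Unset Implicit Arguments.
Theorem mainTheorem7 (C : numClosedFieldType) (hC : complete_reals C)
  (d : nat) (hd : (2 <= d)%N) (A : 'M[C]_d) (hA : positive_definite A)
  (t : 'I_d -> C) (ht : char_poly A = \prod_(i < d) ('X - (t i)%:P)) :
  [/\ (exists T : 'M[C]_d, [/\ power_bounded T, class_C11 T & is_cesaro_limit T A])
      <-> \sum_(i < d) (t i)^-1 = d%:R,
      \sum_(i < d) (t i)^-1 = d%:R <->
      (exists S : 'M[C]_d, [/\ S \in unitmx,
          (forall j : 'I_d, \sum_(i < d) `|S i j| ^+ 2 = 1) &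
          A = invmx (S *m adjmx S)])
    & (exists S : 'M[C]_d, [/\ S \in unitmx,
          (forall j : 'I_d, \sum_(i < d) `|S i j| ^+ 2 = 1) &
          A = invmx (S *m adjmx S)])
      <-> (exists T : 'M[C]_d, [/\ power_bounded T, class_C11 T & is_cesaro_limit T A])].
Proof.
have d0 : (0 < d)%N by apply: leq_trans hd.
have [w hw] := prim_root_exists C d0.
have hsig := sum_t hA ht.
have E1 : (exists T : 'M[C]_d, [/\ power_bounded T, class_C11 T & is_cesaro_limit T A])
          -> \sum_(i < d) (t i)^-1 = d%:R.
  move=> [T [hT _ hl]].
  by rewrite hsig -(tr_A_inv hA); apply: (tr_Ainv hC (A_unit hA) hT hl).
have E2 : \sum_(i < d) (t i)^-1 = d%:R ->
      (exists S : 'M[C]_d, [/\ S \in unitmx,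
          (forall j : 'I_d, \sum_(i < d) `|S i j| ^+ 2 = 1) &
          A = invmx (S *m adjmx S)]).
  by move=> h; apply: (dir2 d0 hA _ hw); rewrite -hsig.
have E3 : (exists S : 'M[C]_d, [/\ S \in unitmx,
          (forall j : 'I_d, \sum_(i < d) `|S i j| ^+ 2 = 1) &
          A = invmx (S *m adjmx S)]) ->
          (exists T : 'M[C]_d, [/\ power_bounded T, class_C11 T & is_cesaro_limit T A]).
  move=> [S [Su hc hAS]].
  exists (S *m diag_mx (\row_k w ^+ k) *m invmx S); split.
  - exact: (T_pb d0 hw Su).
  - exact: (T_C11 d0 hw Su).
  - by rewrite hAS; apply: (T_cesaro hC d0 hw Su hc).
split; split; by [move/E1 | move/E2 | move/E3 | move/E2/E3 | move/E3/E1 | move/E1/E2].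
Qed.
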